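(* Let $\lambda\in(\frac16,\frac56)$ and $x\in[0,1]\setminus\mathcal E$. For $n\ge1$ let $m^+_n$ be the maximum of the absolute values of the slopes of $F^\lambda_n$. If $m_n(x)\neq0$, then $\sqrt{36\lambda^2-1}\le|m_n(x)|\le m^+_n$, and $m^+_n\asymp(6\lambda+1)^n$, i.e. there are constants $0<c\le C$ depending only on $\lambda$ with $c(6\lambda+1)^n\le m^+_n\le C(6\lambda+1)^n$ for all $n\ge1$. Moreover, if $\lambda>\frac13$, then for every $x\in[0,1]\setminus\widetilde{\mathcal E}$, $\lim_{n\to\infty}|m_n(x)|=+\infty$.
   Context: Construction: $F^\lambda_0\equiv0$ on $[0,1]$ (one interval of generation $0$). Given $F^\lambda_n$ with its $4^n$ closed intervals of generation $n$ (covering $[0,1]$, disjoint interiors, $F^\lambda_n$ affine on each), on each interval $[a,b]$ of generation $n$, with $\ell=b-a$ and slope $m$, $F^\lambda_{n+1}$ coincides with $F^\lambda_n$ at $a,a+\ell/3,a+2\ell/3,b$, equals $F^\lambda_n(a+\ell/2)+\lambda\ell\sqrt{1+m^2}$ at $a+\ell/2$, and is affine on $[a,a+\ell/3],[a+\ell/3,a+\ell/2],[a+\ell/2,a+2\ell/3],[a+2\ell/3,b]$. Dynamics: $T(x)=3x$ on $[0,\frac13)$, $6x-2$ on $[\frac13,\frac12)$, $4-6x$ on $[\frac12,\frac23)$, $3x-2$ on $[\frac23,1]$; $U(x)=0,1,2,3$ on these intervals respectively; $u_n(x)=U(T^nx)$; $\beta_{1,2}(x,n)=\#\{k<n:u_k(x)\in\{1,2\}\}$.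 $\mathcal E$ is the set of $x$ whose digit sequence $(u_n(x))$ is eventually constantly $0$ or eventually constantly $3$; $\widetilde{\mathcal E}\supset\mathcal E$ is the set of $x$ for which $(\beta_{1,2}(x,n))_n$ is eventually constant. For $x\notin\mathcal E$, $F^\lambda_n$ is differentiable at $x$ and $m_n(x)$ is its slope at $x$. *)

(* Defs.v *)
From Stdlib Require Import Reals Lra List.
From Coquelicot Require Import Coquelicot.
Import ListNotations.
Open Scope R_scope.

(* F^lambda_n is encoded by the sorted list of its 4^n + 1 nodes (x, F(x)),
   i.e. the endpoints of the 4^n closed intervals of generation n together
   with the values of F^lambda_n there; F^lambda_n is affine between
   consecutive nodes. *)

Definition node := (R * R)%type.

Definition piece_slope (p q : node) : R := (snd q - snd p) / (fst q - fst p).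

Definition new_nodes (lam : R) (p q : node) : list node :=
  let a := fst p in let b := fst q in let l := b - a in
  let m := piece_slope p q in
  [ (a + l / 3, snd p + m * (l / 3));
    (a + l / 2, snd p + m * (l / 2) + lam * l * sqrt (1 + m ^ 2));
    (a + 2 * l / 3, snd p + m * (2 * l / 3)) ].

Fixpoint refine (lam : R) (l : list node) : list node :=
  match l with
  | p :: ((q :: _) as rest) => p :: new_nodes lam p q ++ refine lam rest
  | _ => l
  end.

Fixpoint Fnodes (lam : R) (n : nat) : list node :=
  match n with
  | O => [(0, 0); (1, 0)]
  | S k => refine lam (Fnodes lam k)
  end.

Fixpoint slopes_of (l : list node) : list R :=
  match l with
  | p :: ((q :: _) as rest) => piece_slope p q :: slopes_of rest
  | _ => []
  end.

Definition mplus (lam : R) (n : nat) : R :=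
  fold_right Rmax 0 (map Rabs (slopes_of (Fnodes lam n))).

(* slope of the affine piece [a,b] of the node list containing x, with
   a <= x < b (the last piece also covers its right endpoint). *)
Fixpoint slope_at_list (l : list node) (x : R) : R :=
  match l with
  | p :: ((q :: rest') as rest) =>
      match rest' with
      | [] => piece_slope p q
      | _ => if Rlt_dec x (fst q) then piece_slope p q
             else slope_at_list rest x
      end
  | _ => 0
  end.

(* m_n(x) : the slope of F^lambda_n at x (for x not in E, x lies in the
   interior of an interval of generation n, so this is the derivative). *)
Definition mslope (lam : R) (n : nat) (x : R) : R :=
  slope_at_list (Fnodes lam n) x.

Definition Tmap (x : R) : R :=
  if Rlt_dec x (1/3) then 3 * x
  else if Rlt_dec x (1/2) then 6 * x - 2
  else if Rlt_dec x (2/3) then 4 - 6 * x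
  else 3 * x - 2.

Definition Umap (x : R) : nat :=
  if Rlt_dec x (1/3) then 0%nat
  else if Rlt_dec x (1/2) then 1%nat
  else if Rlt_dec x (2/3) then 2%nat
  else 3%nat.

Definition digit (n : nat) (x : R) : nat := Umap (Nat.iter n Tmap x).

Fixpoint beta12 (x : R) (n : nat) : nat :=
  match n with
  | O => O
  | S k => (beta12 x k +
            (if orb (Nat.eqb (digit k x) 1) (Nat.eqb (digit k x) 2) then 1 else 0))%nat
  end.

Definition in_E (x : R) : Prop :=
  (exists N, forall k, (N <= k)%nat -> digit k x = 0%nat) \/
  (exists N, forall k, (N <= k)%nat -> digit k x = 3%nat).

Definition in_Etilde (x : R) : Prop :=
  exists N, forall n, (N <= n)%nat -> beta12 x n = beta12 x N.

(* Main.v *)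
Require Import Defs.
From Stdlib Require Import Reals Lra List.
From Coquelicot Require Import Coquelicot.
From Stdlib Require Import Lia Classical.
Import ListNotations.
Open Scope R_scope.
Set Bullet Behavior "Strict Subproofs".



Definition nd1 (lam : R) (p q : node) : node :=
  (fst p + (fst q - fst p) / 3, snd p + piece_slope p q * ((fst q - fst p) / 3)).
Definition nd2 lam (p q : node) : node :=
  (fst p + (fst q - fst p) / 2, snd p + piece_slope p q * ((fst q - fst p) / 2)
     + lam * (fst q - fst p) * sqrt (1 + piece_slope p q ^ 2)).
Definition nd3 (lam : R) (p q : node) : node :=
  (fst p + 2 * (fst q - fst p) / 3, snd p + piece_slope p q * (2 * (fst q - fst p) / 3)).

Lemma new_nodes_eq lam p q : new_nodes lam p q = [nd1 lam p q; nd2 lam p q; nd3 lam p q].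
Proof. reflexivity. Qed.

Lemma refine_cons2 lam p q rest :
  refine lam (p :: q :: rest) = p :: new_nodes lam p q ++ refine lam (q :: rest).
Proof. reflexivity. Qed.

Lemma refine_cons lam q rest : exists t, refine lam (q :: rest) = q :: t.
Proof. destruct rest as [|r rest]. exists []; reflexivity. eexists; reflexivity. Qed.

Lemma refine_cons2' lam q r rest : exists r' t, refine lam (q :: r :: rest) = q :: r' :: t.
Proof. rewrite refine_cons2, new_nodes_eq. eexists; eexists; reflexivity. Qed.

Fixpoint chain (P : node -> node -> Prop) (l : list node) : Prop :=
  match l with
  | p :: ((q :: _) as rest) => P p q /\ chain P rest
  | _ => True
  end.

Fixpoint chainex (P : node -> node -> Prop) (l : list node) : Prop :=
  match l with
  | p :: ((q :: _) as rest) => P p q \/ chainex P rest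
  | _ => False
  end.

Lemma chain_refine lam (P Q : node -> node -> Prop) l :
  chain P l ->
  (forall p q, P p q -> Q p (nd1 lam p q) /\ Q (nd1 lam p q) (nd2 lam p q) /\
                        Q (nd2 lam p q) (nd3 lam p q) /\ Q (nd3 lam p q) q) ->
  chain Q (refine lam l).
Proof.
  intros Hc H. induction l as [|p l IH]. simpl; auto.
  destruct l as [|q rest]. simpl; auto.
  destruct Hc as [Hpq Hc]. specialize (IH Hc).
  destruct (H p q Hpq) as (A&B&C&D).
  destruct (refine_cons lam q rest) as [t Ht].
  rewrite refine_cons2, new_nodes_eq, Ht. rewrite Ht in IH.
  cbn [app chain]. cbn [app chain] in IH. tauto.
Qed.

Lemma chainex_refine lam (P Q : node -> node -> Prop) l :
  chainex P l ->
  (forall p q, P p q -> Q p (nd1 lam p q) \/ Q (nd1 lam p q) (nd2 lam p q) \/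
                        Q (nd2 lam p q) (nd3 lam p q) \/ Q (nd3 lam p q) q) ->
  chainex Q (refine lam l).
Proof.
  intros Hc H. induction l as [|p l IH]. simpl in Hc; contradiction.
  destruct l as [|q rest]. simpl in Hc; contradiction.
  destruct (refine_cons lam q rest) as [t Ht].
  rewrite refine_cons2, new_nodes_eq, Ht. rewrite Ht in IH.
  cbn [app chainex]. cbn [app chainex] in IH.
  destruct Hc as [Hpq | Hc].
  - destruct (H p q Hpq) as [A|[B|[C|D]]]; tauto.
  - specialize (IH Hc). tauto.
Qed.

Lemma Fnodes_form lam n : exists p q rest, Fnodes lam n = p :: q :: rest.
Proof.
  induction n as [|n IH]. do 3 eexists; reflexivity.
  destruct IH as (p&q&rest&E). simpl. rewrite E, refine_cons2, new_nodes_eq.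
  do 3 eexists; reflexivity.
Qed.

Lemma nd_x lam p q : fst p < fst q ->
  fst p < fst (nd1 lam p q) /\ fst (nd1 lam p q) < fst (nd2 lam p q) /\
  fst (nd2 lam p q) < fst (nd3 lam p q) /\ fst (nd3 lam p q) < fst q.
Proof. intros H. unfold nd1, nd2, nd3; simpl. lra. Qed.

Definition sorted_x := chain (fun p q => fst p < fst q).

Lemma Fnodes_sorted lam n : sorted_x (Fnodes lam n).
Proof.
  unfold sorted_x in *. induction n as [|n IH]. simpl; lra.
  simpl. apply (chain_refine lam _ _ _ IH). intros p q H. apply nd_x; auto.
Qed.

Fixpoint piece_at (l : list node) (x : R) : node * node :=
  match l with
  | p :: ((q :: rest') as rest) =>
      match rest' with
      | [] => (p, q)
      | _ => if Rlt_dec x (fst q) then (p, q) else piece_at rest x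
      end
  | _ => ((0, 0), (0, 0))
  end.

Lemma piece_at_cons3 p q r t x :
  piece_at (p :: q :: r :: t) x = if Rlt_dec x (fst q) then (p, q) else piece_at (q :: r :: t) x.
Proof. reflexivity. Qed.

Definition sub_piece lam (P : node * node) (x : R) : node * node :=
  let p := fst P in let q := snd P in
  if Rlt_dec x (fst (nd1 lam p q)) then (p, nd1 lam p q)
  else if Rlt_dec x (fst (nd2 lam p q)) then (nd1 lam p q, nd2 lam p q)
  else if Rlt_dec x (fst (nd3 lam p q)) then (nd2 lam p q, nd3 lam p q)
  else (nd3 lam p q, q).

Lemma piece_at_refine lam l x :
  sorted_x l -> (exists p q rest, l = p :: q :: rest) ->
  piece_at (refine lam l) x = sub_piece lam (piece_at l x) x.
Proof.
  induction l as [|p l IH]; intros Hs Hf.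
  { destruct Hf as (?&?&?&E); discriminate. }
  destruct l as [|q rest].
  { destruct Hf as (?&?&?&E); discriminate. }
  destruct rest as [|r rest2].
  { rewrite refine_cons2, new_nodes_eq. reflexivity. }
  destruct Hs as [Hpq Hs].
  assert (IH' : piece_at (refine lam (q :: r :: rest2)) x = sub_piece lam (piece_at (q :: r :: rest2) x) x).
  { apply IH; auto. do 3 eexists; reflexivity. }
  destruct (refine_cons2' lam q r rest2) as (r'&t&Ht).
  rewrite refine_cons2, new_nodes_eq, Ht. rewrite Ht in IH'.
  cbn [app]. rewrite (piece_at_cons3 p (nd1 lam p q)), (piece_at_cons3 (nd1 lam p q)),
    (piece_at_cons3 (nd2 lam p q)), (piece_at_cons3 (nd3 lam p q)), (piece_at_cons3 p q).
  destruct (nd_x lam p q Hpq) as (A&B&C&D).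
  destruct (Rlt_dec x (fst q)) as [Hx|Hx].
  - unfold sub_piece; cbn [fst snd].
    destruct (Rlt_dec x (fst (nd1 lam p q))); auto.
  - rewrite <- IH'.
    destruct (Rlt_dec x (fst (nd1 lam p q))). exfalso. lra.
    destruct (Rlt_dec x (fst (nd2 lam p q))). exfalso. lra.
    destruct (Rlt_dec x (fst (nd3 lam p q))). exfalso. lra. reflexivity.
Qed.

Lemma slope_at_piece l x :
  slope_at_list l x = piece_slope (fst (piece_at l x)) (snd (piece_at l x)).
Proof.
  induction l as [|p l IH].
  - unfold piece_slope; simpl; unfold Rdiv; ring.
  - destruct l as [|q rest].
    + unfold piece_slope; simpl; unfold Rdiv; ring.
    + destruct rest as [|r rest]. reflexivity.
      change (slope_at_list (p :: q :: r :: rest) x) with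
        (if Rlt_dec x (fst q) then piece_slope p q else slope_at_list (q :: r :: rest) x).
      rewrite piece_at_cons3. destruct (Rlt_dec x (fst q)); auto.
Qed.

Definition foldmax (l : list node) := fold_right Rmax 0 (map Rabs (slopes_of l)).

Lemma foldmax_ge0 l : 0 <= foldmax l.
Proof.
  unfold foldmax. induction (slopes_of l) as [|a s IH]; simpl. lra.
  eapply Rle_trans; [exact IH| apply Rmax_r].
Qed.

Lemma slope_le_foldmax l x : Rabs (slope_at_list l x) <= foldmax l.
Proof.
  induction l as [|p l IH].
  - simpl. rewrite Rabs_R0. unfold foldmax; simpl; lra.
  - destruct l as [|q rest].
    + simpl. rewrite Rabs_R0. unfold foldmax; simpl; lra.
    + unfold foldmax in *. cbn [slopes_of map fold_right].
      destruct rest as [|r rest].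
      * simpl. apply Rmax_l.
      * change (slope_at_list (p :: q :: r :: rest) x) with
        (if Rlt_dec x (fst q) then piece_slope p q else slope_at_list (q :: r :: rest) x).
        destruct (Rlt_dec x (fst q)). apply Rmax_l.
        eapply Rle_trans; [exact IH|apply Rmax_r].
Qed.

Lemma chain_foldmax (K : R) (P : node -> node -> Prop) l :
  0 <= K -> (forall p q, P p q -> Rabs (piece_slope p q) <= K) -> chain P l -> foldmax l <= K.
Proof.
  intros HK HP. unfold foldmax. induction l as [|p l IH]; intros Hc. simpl; lra.
  destruct l as [|q rest]. simpl; lra.
  destruct Hc as [H1 H2]. cbn [slopes_of map fold_right].
  apply Rmax_lub; auto.
Qed.

Lemma chainex_foldmax (K : R) (P : node -> node -> Prop) l :
  (forall p q, P p q -> K <= Rabs (piece_slope p q)) -> chainex P l -> K <= foldmax l.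
Proof.
  intros HP. unfold foldmax. induction l as [|p l IH]; intros Hc. simpl in Hc; contradiction.
  destruct l as [|q rest]. simpl in Hc; contradiction.
  cbn [slopes_of map fold_right].
  destruct Hc as [H1|H2].
  - eapply Rle_trans; [apply HP; exact H1| apply Rmax_l].
  - eapply Rle_trans; [apply IH; exact H2| apply Rmax_r].
Qed.



Lemma nd_slopes lam p q : fst p < fst q ->
  piece_slope p (nd1 lam p q) = piece_slope p q /\
  piece_slope (nd1 lam p q) (nd2 lam p q) = piece_slope p q + 6 * lam * sqrt (1 + piece_slope p q ^ 2) /\
  piece_slope (nd2 lam p q) (nd3 lam p q) = piece_slope p q - 6 * lam * sqrt (1 + piece_slope p q ^ 2) /\
  piece_slope (nd3 lam p q) q = piece_slope p q.
Proof.
  intros H. unfold nd1, nd2, nd3.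
  set (m := piece_slope p q). set (s := sqrt (1 + m ^ 2)).
  destruct p as [a fa], q as [b fb]. cbn [fst snd] in *.
  assert (Hm : fb - fa = m * (b - a)) by (unfold m, piece_slope; simpl; field; lra).
  clearbody s m. unfold piece_slope; cbn [fst snd].
  repeat split.
  - field; lra.
  - field; lra.
  - field; lra.
  - replace fb with (fa + m * (b - a)) by lra. field; lra.
Qed.

Definition relpos (P : node * node) (x : R) := (x - fst (fst P)) / (fst (snd P) - fst (fst P)).
Definition slopeP (P : node * node) := piece_slope (fst P) (snd P).
Definition okP (P : node * node) := fst (fst P) < fst (snd P).

Lemma sub_piece_spec lam P x : okP P ->
  let P' := sub_piece lam P x in
  let t := relpos P x in let t' := relpos P' x in
  let m := slopeP P in let m' := slopeP P' in
  let s := sqrt (1 + m ^ 2) in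
  okP P' /\
  ((t < 1/3 /\ t' = 3 * t /\ m' = m) \/
   (1/3 <= t < 1/2 /\ t' = 6 * t - 2 /\ m' = m + 6 * lam * s) \/
   (1/2 <= t < 2/3 /\ t' = 6 * t - 3 /\ m' = m - 6 * lam * s) \/
   (2/3 <= t /\ t' = 3 * t - 2 /\ m' = m)).
Proof.
  destruct P as [p q]. unfold okP; cbn [fst snd]. intros H.
  destruct (nd_slopes lam p q H) as (S1&S2&S3&S4).
  destruct (nd_x lam p q H) as (X1&X2&X3&X4).
  assert (E1 : fst (nd1 lam p q) = fst p + (fst q - fst p) / 3) by reflexivity.
  assert (E2 : fst (nd2 lam p q) = fst p + (fst q - fst p) / 2) by reflexivity.
  assert (E3 : fst (nd3 lam p q) = fst p + 2 * (fst q - fst p) / 3) by reflexivity.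
  unfold sub_piece, relpos, slopeP; cbn [fst snd].
  rewrite E1, E2, E3 in *.
  set (a := fst p) in *. set (b := fst q) in *.
  set (t := (x - a) / (b - a)).
  assert (Hx : x - a = t * (b - a)) by (unfold t; field; lra).
  destruct (Rlt_dec x (a + (b - a) / 3)) as [h1|h1]; cbn [fst snd];
  [| destruct (Rlt_dec x (a + (b - a) / 2)) as [h2|h2]; cbn [fst snd];
  [| destruct (Rlt_dec x (a + 2 * (b - a) / 3)) as [h3|h3]; cbn [fst snd]]];
  rewrite ?E1, ?E2, ?E3; fold a b.
  - split. lra. left. split. nra. split. unfold t; field; lra. exact S1.
  - split. lra. right; left. split. nra. split. unfold t; field; lra. exact S2.
  - split. lra. right; right; left. split. nra. split. unfold t; field; lra. exact S3.
  - split. lra. right; right; right. split. nra. split. unfold t; field; lra. exact S4.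
Qed.



Lemma sq_facts m : let s := sqrt (1 + m ^ 2) in
  s * s = 1 + m ^ 2 /\ 0 <= s /\ 1 <= s /\ Rabs m <= s /\ s <= 1 + Rabs m.
Proof.
  intros s. assert (H0 : 0 <= 1 + m ^ 2) by (pose proof (pow2_ge_0 m); lra).
  split. unfold s; apply sqrt_sqrt; auto.
  split. apply sqrt_pos.
  split. rewrite <- sqrt_1. apply sqrt_le_1_alt. pose proof (pow2_ge_0 m); lra.
  split. rewrite <- sqrt_Rsqr_abs. apply sqrt_le_1_alt. unfold Rsqr; simpl; lra.
  rewrite <- (sqrt_Rsqr (1 + Rabs m)) by (pose proof (Rabs_pos m); lra).
  apply sqrt_le_1_alt. unfold Rsqr.
  pose proof (Rabs_pos m). pose proof (sqrt_Rsqr_abs m).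
  assert (Rabs m * Rabs m = m * m) by (rewrite <- Rabs_mult; apply Rabs_right; nra).
  simpl; nra.
Qed.

Lemma low_bound lam m e : 1/6 < lam -> (e = 1 \/ e = -1) ->
  sqrt (36 * lam ^ 2 - 1) <= Rabs (m + e * (6 * lam * sqrt (1 + m ^ 2))).
Proof.
  intros Hl He. destruct (sq_facts m) as (Hs&Hs0&Hs1&_).
  set (s := sqrt (1 + m ^ 2)) in *.
  rewrite <- sqrt_Rsqr_abs. apply sqrt_le_1_alt. unfold Rsqr.
  pose proof (pow2_ge_0 (s + 6 * lam * e * m)).
  destruct He; subst e; nra.
Qed.

Lemma grow_bound lam m e : 1/6 < lam -> (e = 1 \/ e = -1) ->
  (6 * lam - 1) * Rmax 1 (Rabs m) <= Rabs (m + e * (6 * lam * sqrt (1 + m ^ 2))).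
Proof.
  intros Hl He. destruct (sq_facts m) as (Hs&Hs0&Hs1&Hm&_).
  set (s := sqrt (1 + m ^ 2)) in *.
  assert (Rmax 1 (Rabs m) <= s) by (apply Rmax_lub; lra).
  assert ((6 * lam - 1) * Rmax 1 (Rabs m) <= (6 * lam - 1) * s) by (apply Rmult_le_compat_l; lra).
  revert Hm. unfold Rabs at 1 3; destruct (Rcase_abs m); destruct (Rcase_abs (m + e * (6 * lam * s)));
  destruct He; subst e; nra.
Qed.

Lemma up_bound lam m e : 1/6 < lam -> (e = 1 \/ e = -1) ->
  Rabs (m + e * (6 * lam * sqrt (1 + m ^ 2))) + 1 <= (6 * lam + 1) * (Rabs m + 1).
Proof.
  intros Hl He. destruct (sq_facts m) as (Hs&Hs0&Hs1&Hm&Hm2).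
  set (s := sqrt (1 + m ^ 2)) in *.
  revert Hm Hm2. unfold Rabs; destruct (Rcase_abs m); destruct (Rcase_abs (m + e * (6 * lam * s)));
  destruct He; subst e; nra.
Qed.

Lemma big_bound lam m : 1/6 < lam -> exists e, (e = 1 \/ e = -1) /\
  6 * lam <= Rabs (m + e * (6 * lam * sqrt (1 + m ^ 2))) /\
  (6 * lam + 1) * Rabs m <= Rabs (m + e * (6 * lam * sqrt (1 + m ^ 2))).
Proof.
  intros Hl. destruct (sq_facts m) as (Hs&Hs0&Hs1&Hm&Hm2).
  set (s := sqrt (1 + m ^ 2)) in *.
  destruct (Rle_dec 0 m).
  - exists 1. split. auto. revert Hm. unfold Rabs; destruct (Rcase_abs m);
    destruct (Rcase_abs (m + 1 * (6 * lam * s))); intros; split; nra.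
  - exists (-1). split. auto. revert Hm. unfold Rabs; destruct (Rcase_abs m);
    destruct (Rcase_abs (m + -1 * (6 * lam * s))); intros; split; nra.
Qed.

Lemma pm_eq m a : m + a = m + 1 * a /\ m - a = m + -1 * a.
Proof. split; ring. Qed.

Lemma Fnodes_S lam n : Fnodes lam (S n) = refine lam (Fnodes lam n).
Proof. reflexivity. Qed.

Lemma slope0 : piece_slope (0, 0) (1, 0) = 0.
Proof. unfold piece_slope; simpl; field. Qed.

Lemma upper_chain lam n : 1/6 < lam ->
  chain (fun p q => fst p < fst q /\ Rabs (piece_slope p q) + 1 <= (6 * lam + 1) ^ n) (Fnodes lam n).
Proof.
  intros Hl. induction n as [|n IH].
  - simpl. rewrite slope0, Rabs_R0. lra.
  - rewrite Fnodes_S. apply (chain_refine lam _ _ _ IH).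
    intros p q [H1 H2]. destruct (nd_x lam p q H1) as (X1&X2&X3&X4).
    destruct (nd_slopes lam p q H1) as (S1&S2&S3&S4).
    set (m := piece_slope p q) in *.
    destruct (pm_eq m (6 * lam * sqrt (1 + m ^ 2))) as [E1 E2].
    pose proof (up_bound lam m 1 Hl (or_introl eq_refl)).
    pose proof (up_bound lam m (-1) Hl (or_intror eq_refl)).
    cbn [pow].
    rewrite S1, S2, S3, S4, E1, E2.
    assert (0 <= 6 * lam + 1) by lra. pose proof (Rabs_pos m).
    repeat split; try lra; nra.
Qed.

Lemma lower_step lam (X Y : R) l : 1/6 < lam -> (Y <= 6 * lam \/ Y <= (6 * lam + 1) * X) ->
  chainex (fun p q => fst p < fst q /\ X <= Rabs (piece_slope p q)) l ->
  chainex (fun p q => fst p < fst q /\ Y <= Rabs (piece_slope p q)) (refine lam l).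
Proof.
  intros Hl HY Hc. apply (chainex_refine lam _ _ _ Hc).
  intros p q [H1 H2]. destruct (nd_x lam p q H1) as (X1&X2&X3&X4).
  destruct (nd_slopes lam p q H1) as (S1&S2&S3&S4).
  set (m := piece_slope p q) in *.
  destruct (pm_eq m (6 * lam * sqrt (1 + m ^ 2))) as [E1 E2].
  destruct (big_bound lam m Hl) as (e&He&B1&B2).
  assert (0 <= 6 * lam + 1) by lra.
  assert ((6 * lam + 1) * X <= (6 * lam + 1) * Rabs m) by (apply Rmult_le_compat_l; lra).
  destruct He; subst e.
  - right; left. rewrite S2, E1. split. lra. lra.
  - right; right; left. rewrite S3, E2. split. lra. lra.
Qed.

Lemma lower_chain lam n : 1/6 < lam ->
  chainex (fun p q => fst p < fst q /\ 6 * lam * (6 * lam + 1) ^ n <= Rabs (piece_slope p q))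
    (Fnodes lam (S n)).
Proof.
  intros Hl. induction n as [|n IH].
  - rewrite Fnodes_S. apply (lower_step lam 0). auto. left; simpl; lra.
    simpl. left. rewrite slope0, Rabs_R0. lra.
  - rewrite Fnodes_S. apply (lower_step lam (6 * lam * (6 * lam + 1) ^ n) _ _ Hl); [right; simpl; lra | exact IH].
Qed.

Lemma mplus_foldmax lam n : mplus lam n = foldmax (Fnodes lam n).
Proof. reflexivity. Qed.

Theorem part2 lam : 1/6 < lam < 5/6 ->
  (exists c C : R, 0 < c /\ c <= C /\
     forall n : nat, (1 <= n)%nat ->
       c * (6 * lam + 1) ^ n <= mplus lam n <= C * (6 * lam + 1) ^ n).
Proof.
  intros Hl. exists (6 * lam / (6 * lam + 1)), 1.
  split. apply Rdiv_lt_0_compat; lra.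
  split. apply Rmult_le_reg_r with (6 * lam + 1). lra. field_simplify; lra.
  intros n Hn. rewrite mplus_foldmax. split.
  - destruct n as [|k]. inversion Hn.
    replace (6 * lam / (6 * lam + 1) * (6 * lam + 1) ^ S k) with (6 * lam * (6 * lam + 1) ^ k)
      by (simpl; field; lra).
    apply (chainex_foldmax _ (fun p q => fst p < fst q /\ 6 * lam * (6 * lam + 1) ^ k <= Rabs (piece_slope p q))).
    intros p q [_ H']; exact H'. apply lower_chain; lra.
  - assert (1 <= (6 * lam + 1) ^ n) by (apply pow_R1_Rle; lra).
    apply Rle_trans with ((6 * lam + 1) ^ n - 1); [|lra].
    apply (chain_foldmax _ (fun p q => fst p < fst q /\ Rabs (piece_slope p q) + 1 <= (6 * lam + 1) ^ n)).
    lra. intros p q [_ H']; lra. apply upper_chain; lra.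
Qed.



Definition Pn lam x n := piece_at (Fnodes lam n) x.

Lemma Pn_S lam x n : Pn lam x (S n) = sub_piece lam (Pn lam x n) x.
Proof.
  unfold Pn. rewrite Fnodes_S. apply piece_at_refine. apply Fnodes_sorted. apply Fnodes_form.
Qed.

Lemma mslope_Pn lam n x : mslope lam n x = slopeP (Pn lam x n).
Proof. unfold mslope, slopeP, Pn. apply slope_at_piece. Qed.

Lemma Pn_ok lam x n : okP (Pn lam x n).
Proof.
  induction n as [|n IH].
  - unfold okP, Pn; simpl; lra.
  - rewrite Pn_S. apply (sub_piece_spec lam _ x IH).
Qed.

Lemma Pn_step lam x n :
  let t := relpos (Pn lam x n) x in let t' := relpos (Pn lam x (S n)) x in
  let m := mslope lam n x in let m' := mslope lam (S n) x in
  let s := sqrt (1 + m ^ 2) in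
  ((t < 1/3 /\ t' = 3 * t /\ m' = m) \/
   (1/3 <= t < 1/2 /\ t' = 6 * t - 2 /\ m' = m + 1 * (6 * lam * s)) \/
   (1/2 <= t < 2/3 /\ t' = 6 * t - 3 /\ m' = m + -1 * (6 * lam * s)) \/
   (2/3 <= t /\ t' = 3 * t - 2 /\ m' = m)).
Proof.
  intros. unfold s, t, t', m, m'. rewrite !mslope_Pn, Pn_S.
  destruct (sub_piece_spec lam (Pn lam x n) x (Pn_ok lam x n)) as [_ H].
  destruct H as [A|[(b1&b2&b3)|[(b1&b2&b3)|D]]].
  - left; exact A.
  - right; left. destruct b1. repeat split; auto; lra.
  - right; right; left. destruct b1. repeat split; auto; lra.
  - right; right; right; exact D.
Qed.

Lemma mslope0 lam x : mslope lam 0 x = 0.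
Proof. rewrite mslope_Pn. unfold Pn, slopeP; simpl. apply slope0. Qed.

Lemma relpos0 lam x : relpos (Pn lam x 0) x = x.
Proof. unfold relpos, Pn; simpl. field. Qed.

Theorem part1 lam : 1/6 < lam < 5/6 ->
  (forall x : R, 0 <= x <= 1 -> ~ in_E x ->
     forall n : nat, (1 <= n)%nat -> mslope lam n x <> 0 ->
       sqrt (36 * lam ^ 2 - 1) <= Rabs (mslope lam n x) <= mplus lam n).
Proof.
  intros Hl x _ _ n _. split.
  - revert H. induction n as [|n IH]; intros Hn.
    + rewrite mslope0 in Hn. lra.
    + destruct (Pn_step lam x n) as [(_&_&E)|[(_&_&E)|[(_&_&E)|(_&_&E)]]];
      rewrite E in *; try (apply IH; exact Hn); apply low_bound; auto; lra.
  - unfold mslope. rewrite mplus_foldmax. apply slope_le_foldmax.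
Qed.



Lemma T01 y : (y = 0 \/ y = 1) -> (Tmap y = 0 \/ Tmap y = 1) /\ Umap y <> 1%nat /\ Umap y <> 2%nat.
Proof.
  intros Hy. unfold Tmap, Umap.
  destruct (Rlt_dec y (1/3)); [|destruct (Rlt_dec y (1/2)); [|destruct (Rlt_dec y (2/3))]];
  (split; [lra| split; intro E; try discriminate E; lra]).
Qed.

Lemma T_step y t t' : 0 <= t <= 1 -> (y = t \/ y = 1 - t \/ y = 0 \/ y = 1) ->
  ((t < 1/3 /\ t' = 3 * t) \/ (1/3 <= t < 1/2 /\ t' = 6 * t - 2) \/
   (1/2 <= t < 2/3 /\ t' = 6 * t - 3) \/ (2/3 <= t /\ t' = 3 * t - 2)) ->
  (Tmap y = t' \/ Tmap y = 1 - t' \/ Tmap y = 0 \/ Tmap y = 1) /\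
  ((Umap y = 1 \/ Umap y = 2)%nat -> (1/3 <= t < 2/3) \/ Tmap y = 0 \/ Tmap y = 1).
Proof.
  intros Ht Hy Hc. unfold Tmap, Umap.
  destruct (Rlt_dec y (1/3)); [|destruct (Rlt_dec y (1/2)); [|destruct (Rlt_dec y (2/3))]];
  (split; [lra| intros [E|E]; try discriminate E; lra]).
Qed.

Definition yn x n := Nat.iter n Tmap x.
Definition tn lam x n := relpos (Pn lam x n) x.

Lemma yn_S x n : yn x (S n) = Tmap (yn x n).
Proof. reflexivity. Qed.

Lemma t_case lam x n :
  let t := tn lam x n in let t' := tn lam x (S n) in
  ((t < 1/3 /\ t' = 3 * t) \/ (1/3 <= t < 1/2 /\ t' = 6 * t - 2) \/
   (1/2 <= t < 2/3 /\ t' = 6 * t - 3) \/ (2/3 <= t /\ t' = 3 * t - 2)).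
Proof.
  intros t t'. unfold t, t', tn.
  destruct (Pn_step lam x n) as [(a&b&_)|[(a&b&_)|[(a&b&_)|(a&b&_)]]]; lra.
Qed.

Lemma inv_all lam x : 0 <= x <= 1 -> forall n,
  0 <= tn lam x n <= 1 /\
  (yn x n = tn lam x n \/ yn x n = 1 - tn lam x n \/ yn x n = 0 \/ yn x n = 1).
Proof.
  intros Hx n. induction n as [|n [IH1 IH2]].
  - unfold tn. rewrite relpos0. simpl. lra.
  - pose proof (t_case lam x n) as Hc. simpl in Hc.
    destruct (T_step (yn x n) (tn lam x n) (tn lam x (S n)) IH1 IH2 Hc) as [A _].
    rewrite yn_S. split; [lra| exact A].
Qed.

Definition middig x k := (digit k x = 1 \/ digit k x = 2)%nat.

Lemma mid_or_stuck lam x n : 0 <= x <= 1 -> middig x n ->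
  (1/3 <= tn lam x n < 2/3) \/ yn x (S n) = 0 \/ yn x (S n) = 1.
Proof.
  intros Hx Hm. destruct (inv_all lam x Hx n) as [IH1 IH2].
  pose proof (t_case lam x n) as Hc. simpl in Hc.
  destruct (T_step (yn x n) (tn lam x n) (tn lam x (S n)) IH1 IH2 Hc) as [_ B].
  rewrite yn_S. apply B. exact Hm.
Qed.

Lemma stuck x n : (yn x n = 0 \/ yn x n = 1) -> forall k, (n <= k)%nat ->
  (yn x k = 0 \/ yn x k = 1) /\ ~ middig x k.
Proof.
  intros H k Hk. induction Hk as [|k Hk IH].
  - split; auto. destruct (T01 _ H) as (_&A&B). unfold middig, digit. fold (yn x n). tauto.
  - destruct IH as [IH _]. rewrite yn_S. destruct (T01 _ IH) as (A&_).
    split; auto. destruct (T01 _ A) as (_&B&C). unfold middig, digit.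
    change (Nat.iter (S k) Tmap x) with (Tmap (yn x k)). tauto.
Qed.

Lemma beta_const x N d : (forall k, (N <= k)%nat -> ~ middig x k) -> beta12 x (N + d) = beta12 x N.
Proof.
  intros H. induction d as [|d IH]. rewrite Nat.add_0_r; reflexivity.
  rewrite Nat.add_succ_r. simpl. rewrite IH.
  assert (Hn : ~ middig x (N + d)) by (apply H; lia). unfold middig in Hn.
  destruct (Nat.eqb_spec (digit (N + d) x) 1); destruct (Nat.eqb_spec (digit (N + d) x) 2);
  simpl; try tauto; lia.
Qed.

Lemma inf_middig x : ~ in_Etilde x -> forall N, exists k, (N <= k)%nat /\ middig x k.
Proof.
  intros HE N. apply NNPP. intros Hno. apply HE. exists N. intros n Hn.
  replace n with (N + (n - N))%nat by lia. apply beta_const.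
  intros k Hk Hm. apply Hno. exists k. auto.
Qed.

Lemma inf_mid lam x : 0 <= x <= 1 -> ~ in_Etilde x ->
  forall N, exists k, (N <= k)%nat /\ 1/3 <= tn lam x k < 2/3.
Proof.
  intros Hx HE N. destruct (inf_middig x HE N) as (k&Hk&Hm).
  destruct (inf_middig x HE (S k)) as (k'&Hk'&Hm').
  exists k. split; auto.
  destruct (mid_or_stuck lam x k Hx Hm) as [A|A]; auto.
  exfalso. destruct (stuck x (S k) A k' Hk') as [_ B]. auto.
Qed.

Definition wn lam x n := Rmax 1 (Rabs (mslope lam n x)).

Lemma w_step lam x n : 1/3 < lam ->
  wn lam x n <= wn lam x (S n) /\
  (1/3 <= tn lam x n < 2/3 -> (6 * lam - 1) * wn lam x n <= wn lam x (S n)).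
Proof.
  intros Hl. unfold wn, tn.
  assert (W1 : 1 <= Rmax 1 (Rabs (mslope lam n x))) by apply Rmax_l.
  destruct (Pn_step lam x n) as [(a&b&E)|[(a&b&E)|[(a&b&E)|(a&b&E)]]].
  - rewrite E. split. lra. intros; lra.
  - pose proof (grow_bound lam (mslope lam n x) 1 ltac:(lra) (or_introl eq_refl)).
    pose proof (Rmax_r 1 (Rabs (mslope lam (S n) x))). rewrite <- E in *.
    assert (Rmax 1 (Rabs (mslope lam n x)) <= (6 * lam - 1) * Rmax 1 (Rabs (mslope lam n x))) by nra.
    split; intros; lra.
  - pose proof (grow_bound lam (mslope lam n x) (-1) ltac:(lra) (or_intror eq_refl)).
    pose proof (Rmax_r 1 (Rabs (mslope lam (S n) x))). rewrite <- E in *.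
    assert (Rmax 1 (Rabs (mslope lam n x)) <= (6 * lam - 1) * Rmax 1 (Rabs (mslope lam n x))) by nra.
    split; intros; lra.
  - rewrite E. split. lra. intros; lra.
Qed.

Lemma w_mono lam x i j : 1/3 < lam -> (i <= j)%nat -> wn lam x i <= wn lam x j.
Proof.
  intros Hl H. induction H. lra. eapply Rle_trans; [exact IHle| apply (w_step lam x m Hl)].
Qed.

Lemma w_pow lam x : 1/3 < lam -> 0 <= x <= 1 -> ~ in_Etilde x ->
  forall K, exists N, forall n, (N <= n)%nat -> (6 * lam - 1) ^ K <= wn lam x n.
Proof.
  intros Hl Hx HE K. induction K as [|K [N HN]].
  - exists 0%nat. intros n _. simpl. apply Rmax_l.
  - destruct (inf_mid lam x Hx HE N) as (k&Hk&Hm).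
    exists (S k). intros n Hn.
    pose proof (HN k Hk). destruct (w_step lam x k Hl) as [_ B]. specialize (B Hm).
    pose proof (w_mono lam x (S k) n Hl Hn).
    simpl. assert (0 <= 6 * lam - 1) by lra.
    assert ((6 * lam - 1) * (6 * lam - 1) ^ K <= (6 * lam - 1) * wn lam x k)
      by (apply Rmult_le_compat_l; lra).
    lra.
Qed.

Theorem part3 lam : 
  (1/3 < lam ->
     forall x : R, 0 <= x <= 1 -> ~ in_Etilde x ->
       is_lim_seq (fun n : nat => Rabs (mslope lam n x)) p_infty).
Proof.
  intros Hl x Hx HE. apply is_lim_seq_spec. intros M.
  assert (Hr : 1 < 6 * lam - 1) by lra.
  destruct (proj2 (is_lim_seq_spec _ _) (is_lim_seq_geom_p _ Hr) (Rmax M 1)) as [K HK].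
  specialize (HK K (le_n K)).
  destruct (w_pow lam x Hl Hx HE K) as [N HN].
  exists N. intros n Hn. specialize (HN n Hn). unfold wn in HN.
  pose proof (Rmax_l M 1). pose proof (Rmax_r M 1).
  unfold Rmax at 1 in HN. destruct (Rle_dec 1 (Rabs (mslope lam n x))); lra.
Qed.

Theorem lemma3p5 (lam : R) (Hlam : 1/6 < lam < 5/6) :
  (forall x : R, 0 <= x <= 1 -> ~ in_E x ->
     forall n : nat, (1 <= n)%nat -> mslope lam n x <> 0 ->
       sqrt (36 * lam ^ 2 - 1) <= Rabs (mslope lam n x) <= mplus lam n)
  /\
  (exists c C : R, 0 < c /\ c <= C /\
     forall n : nat, (1 <= n)%nat ->
       c * (6 * lam + 1) ^ n <= mplus lam n <= C * (6 * lam + 1) ^ n)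
  /\
  (1/3 < lam ->
     forall x : R, 0 <= x <= 1 -> ~ in_Etilde x ->
       is_lim_seq (fun n : nat => Rabs (mslope lam n x)) p_infty).
Proof.
  split; [exact (part1 lam Hlam)|]. split; [exact (part2 lam Hlam)|]. exact (part3 lam).
Qed.
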